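(* Let $n\ge3$, $A$ a commutative ring, $\alpha_k$ a simple root ($k\in\{2,2',3,\dots,n\}$), and $\omega\in PBr(D_n)$, viewed in $Br(D_n,A)$ via $y_\alpha\mapsto y_\alpha^0$. Then there exists $\omega'\in Br(D_n)$, independent of $a$, such that $y_k^a\,\omega=\omega'\,y_k^a$ in $Br(D_n,A)$ for all $a\in A$. Consequently, for every $k$ and every $a\in A$, the element $y_k^a(y_k^0)^{-1}\in Br(D_n,A)$ commutes with every element of $PBr(D_n)$.
   Context: Simple roots of $D_n$: $\alpha_i=-\epsilon_{i-1}+\epsilon_i$ ($2\le i\le n$), $\alpha_{2'}=\epsilon_1+\epsilon_2$; adjacent pairs are $\{2,3\},\{2',3\},\{k,k+1\}$ ($3\le k\le n-1$), ordered by $2<3<\dots<n$ and $2'<3$. Write $y_k^a=y_{\alpha_k}^a$. $Br(D_n,A)$ is generated by $y_k^a$ with relations for $a,b,c\in A$: $y_k^a y_k^0 y_k^b=y_k^0y_k^0y_k^{a+b}$; $y_k^ay_l^b=y_l^by_k^a$ for non-adjacent $k\ne l$; $y_k^ay_l^by_k^c=y_l^cy_k^{b+ac}y_l^a$ for adjacent $k<l$. $Br(D_n)=Br(D_n,0)$ (generators $y_k$, with commutation for non-adjacent and braid relations $y_ky_ly_k=y_ly_ky_l$ for adjacent pairs) is identified with the subgroup generated by the $y_k^0$; $PBr(D_n)$ is the kernel of $Br(D_n)\to W(D_n)$, $y_k\mapsto$ reflection $\sigma_{\alpha_k}$. *)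

(* Defs.v *)
From mathcomp Require Import all_boot all_order all_algebra.
Set Implicit Arguments. Unset Strict Implicit. Unset Printing Implicit Defensive.
Import GRing.Theory.
Local Open Scope ring_scope.

(* Dynkin diagram D_n.  Nodes are encoded by 'I_n:                           *)
(*   node 0      <-> alpha_{2'} = eps_1 + eps_2                              *)
(*   node j >= 1 <-> alpha_{j+1} = - eps_j + eps_{j+1}                       *)
(* (coordinates eps_1 .. eps_n are the indices 0 .. n-1).                    *)
(* Adjacent pairs {2,3},{2',3},{k,k+1} (3<=k<=n-1) become {1,2},{0,2},        *)
(* {j,j+1} (2<=j<=n-2); the paper's order 2<3<..<n, 2'<3 becomes the usual   *)
(* order on node indices restricted to adjacent pairs.                       *)

Definition node (n : nat) := 'I_n.

(* k and l adjacent with k < l in the paper's order *)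
Definition adj_lt (n : nat) (k l : node n) : bool :=
  ((0 < val k)%N && ((val k).+1 == val l)) || ((val k == 0%N) && (val l == 2%N)).

Definition adjacent (n : nat) (k l : node n) : bool := adj_lt k l || adj_lt l k.

Definition root_vec (n : nat) (k : node n) : 'rV[int]_n :=
  \row_(i < n)
    (if val k == 0%N then (if (val i == 0%N) || (val i == 1%N) then 1 else 0)
     else if val i == val k then 1
     else if (val i).+1 == val k then -1 else 0).

Definition refl_mx (n : nat) (k : node n) : 'M[int]_n :=
  1%:M - (root_vec k)^T *m root_vec k.

(* Br(D_n) : words in the generators y_k and their inverses.                 *)
(* A letter (k, false) is y_k, (k, true) is y_k^{-1}.                         *)
Definition artin_word (n : nat) := seq (node n * bool).

(* (sigma is an involution, so y_k^{-1} maps to sigma_{alpha_k} as well)     *)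
Definition weyl_image (n : nat) (w : artin_word n) : 'M[int]_n :=
  foldr (fun x acc => refl_mx x.1 *m acc) 1%:M w.

Definition in_PBr (n : nat) (w : artin_word n) : Prop := weyl_image w = 1%:M.

(* Br(D_n, A) : group given by generators y_k^a (k node, a in A) and the     *)
(* relations of the paper.  Elements are words of letters (k, a, inv);       *)
(* equality in the group is the congruence [br_eq] generated by free-group   *)
(* cancellation and the defining relations.                                  *)
Section BrA.
Variables (n : nat) (A : comPzRingType).

Definition letter := (node n * A * bool)%type.
Definition word := seq letter.

Definition y (k : node n) (a : A) : letter := (k, a, false).
Definition yinv (k : node n) (a : A) : letter := (k, a, true).

Inductive br_rel : word -> word -> Prop :=
  | rel_cancel_r (k : node n) (a : A) : br_rel [:: y k a; yinv k a] [::]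
  | rel_cancel_l (k : node n) (a : A) : br_rel [:: yinv k a; y k a] [::]
  | rel_1 (k : node n) (a b : A) :
      br_rel [:: y k a; y k 0; y k b] [:: y k 0; y k 0; y k (a + b)]
  | rel_comm (k l : node n) (a b : A) :
      k != l -> ~~ adjacent k l ->
      br_rel [:: y k a; y l b] [:: y l b; y k a]
  | rel_braid (k l : node n) (a b c : A) :
      adj_lt k l ->
      br_rel [:: y k a; y l b; y k c] [:: y l c; y k (b + a * c); y l a].

Inductive br_eq : word -> word -> Prop :=
  | br_step (u v r s : word) : br_rel r s -> br_eq (u ++ r ++ v) (u ++ s ++ v)
  | br_refl (w : word) : br_eq w w
  | br_sym (w1 w2 : word) : br_eq w1 w2 -> br_eq w2 w1
  | br_trans (w1 w2 w3 : word) : br_eq w1 w2 -> br_eq w2 w3 -> br_eq w1 w3.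

Definition embed (w : artin_word n) : word :=
  map (fun x : node n * bool => (x.1, (0 : A), x.2)) w.

End BrA.

(* Main.v *)
Require Import Defs.
From mathcomp Require Import all_boot all_order all_algebra zify.
From Stdlib Require Import ProofIrrelevance FunctionalExtensionality PropExtensionality ClassicalEpsilon.
Set Implicit Arguments. Unset Strict Implicit. Unset Printing Implicit Defensive.


Section Grp.
Variables (G : Type) (mul : G -> G -> G) (e : G) (iv : G -> G).
Local Infix "**" := mul (at level 40, left associativity).
Hypotheses (gA : forall a b c, a ** b ** c = a ** (b ** c))
  (g1l : forall a, e ** a = a) (g1r : forall a, a ** e = a)
  (gVl : forall a, iv a ** a = e) (gVr : forall a, a ** iv a = e).

Definition cj c g := c ** g ** iv c.
Definition cm a b := a ** b = b ** a.
Definition sq a := a ** a.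

Lemma gKl a b : iv a ** (a ** b) = b.
Proof. by rewrite -gA gVl g1l. Qed.
Lemma gKVl a b : a ** (iv a ** b) = b.
Proof. by rewrite -gA gVr g1l. Qed.
Lemma gKr a b : b ** a ** iv a = b.
Proof. by rewrite gA gVr g1r. Qed.
Lemma gKVr a b : b ** iv a ** a = b.
Proof. by rewrite gA gVl g1r. Qed.
Lemma ginv_uniq a b : a ** b = e -> b = iv a.
Proof. by move=> h; rewrite -(gKl a b) h g1r. Qed.
Lemma gVV a : iv (iv a) = a.
Proof. by symmetry; apply: ginv_uniq; rewrite gVl. Qed.
Lemma gVM a b : iv (a ** b) = iv b ** iv a.
Proof. by symmetry; apply: ginv_uniq; rewrite gA gKVl gVr. Qed.
Lemma gV1 : iv e = e.
Proof. by symmetry; apply: ginv_uniq; rewrite g1l. Qed.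
Lemma gcanl a b c : a ** b = a ** c -> b = c.
Proof. by move=> h; rewrite -(gKl a b) h gKl. Qed.
Lemma gcanr a b c : b ** a = c ** a -> b = c.
Proof. by move=> h; rewrite -(gKr a b) h gKr. Qed.

Lemma cjM a b g : cj (a ** b) g = cj a (cj b g).
Proof. by rewrite /cj gVM !gA. Qed.
Lemma cj1 g : cj e g = g.
Proof. by rewrite /cj gV1 g1l g1r. Qed.
Lemma cjK a g : cj (iv a) (cj a g) = g.
Proof. by rewrite -cjM gVl cj1. Qed.
Lemma cjVK a g : cj a (cj (iv a) g) = g.
Proof. by rewrite -cjM gVr cj1. Qed.
Lemma cj_inj a g h : cj a g = cj a h -> g = h.
Proof. by move=> E; rewrite -(cjK a g) E cjK. Qed.
Lemma cjMg a g h : cj a (g ** h) = cj a g ** cj a h.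
Proof. by rewrite /cj !gA gKl. Qed.
Lemma cjV a g : cj a (iv g) = iv (cj a g).
Proof. by rewrite /cj !gVM gVV gA. Qed.
Lemma cj_sq a g : cj a (sq g) = sq (cj a g).
Proof. by rewrite /sq cjMg. Qed.
Lemma cmP a g : cm a g <-> cj a g = g.
Proof. rewrite /cm /cj; split=> h; first by rewrite h gKr.
by rewrite -{2}h gKVr. Qed.
Lemma cm_sym a b : cm a b -> cm b a.
Proof. by move=> h; apply: esym. Qed.
Lemma cm_V a g : cm a g -> cm (iv a) g.
Proof. move/cmP=> h; apply/cmP. by rewrite -{1}h cjK. Qed.
Lemma cm_Vr a g : cm a g -> cm a (iv g).
Proof. move=> h; apply: cm_sym; apply: cm_V; exact: cm_sym. Qed.
Lemma cm_M a b g : cm a g -> cm b g -> cm (a ** b) g.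
Proof. move/cmP=> h1 /cmP h2; apply/cmP. by rewrite cjM h2 h1. Qed.
Lemma cm_Mr a g h : cm a g -> cm a h -> cm a (g ** h).
Proof. move=> h1 h2; apply: cm_sym; apply: cm_M; exact: cm_sym. Qed.
Lemma cm_1 g : cm e g.
Proof. by rewrite /cm g1l g1r. Qed.
Lemma cm_refl g : cm g g.
Proof. by []. Qed.
Lemma cm_sq a g : cm a g -> cm (sq a) g.
Proof. move=> h; exact: cm_M. Qed.
Lemma cm_cj c a g : cm c a -> cm c g -> cm c (cj a g).
Proof. move=> h1 h2; rewrite /cj; apply: cm_Mr; [apply: cm_Mr => // | exact: cm_Vr]. Qed.
Lemma cm_cjE a c g : cm (cj a c) (cj a g) <-> cm c g.
Proof. rewrite !cmP.
have -> : cj a c = a ** c ** iv a by [].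
rewrite cjM cjM cjK.
by split=> [/cj_inj|->]. Qed.
Lemma cm_cjl a c g : cm c (cj a g) <-> cm (cj (iv a) c) g.
Proof. by rewrite -(cm_cjE (iv a)) cjK. Qed.
Lemma cj_sqV a g : cm (sq a) g -> cj a g = cj (iv a) g.
Proof. move/cmP=> h. by rewrite -{2}h -cjM /sq -gA gVl g1l. Qed.
Lemma cj_cmM a b g : cm a b -> cj a (cj b g) = cj b (cj a g).
Proof. by move=> h; rewrite -!cjM h. Qed.

Definition adj (p q : nat) : Prop :=
  (0 < p /\ q = p.+1) \/ (0 < q /\ p = q.+1) \/ (p = 0 /\ q = 2) \/ (p = 2 /\ q = 0).
Definition nadj (p q : nat) : Prop := p <> q /\ ~ adj p q.

Variables (N : nat) (Y Ya : nat -> G).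
Hypotheses (hN : 3 <= N)
  (hYc : forall p q, p < N -> q < N -> nadj p q -> cm (Y p) (Y q))
  (hYac : forall p q, p < N -> q < N -> nadj p q -> cm (Ya p) (Y q))
  (hYb : forall p q, p < N -> q < N -> adj p q -> Y p ** Y q ** Y p = Y q ** Y p ** Y q)
  (hR1 : forall p, p < N -> cm (Ya p) (sq (Y p)))
  (hE : forall p q, p < N -> q < N -> adj p q -> Y p ** Y q ** Ya p = Ya q ** Y p ** Y q)
  (hM : forall p q, p < N -> q < N -> adj p q -> Y p ** Ya q ** Y p = Y q ** Ya p ** Y q).

Definition X p := Ya p ** iv (Y p).

Ltac side := rewrite /nadj /adj; lia.
Lemma h0N : 0 < N. Proof. lia. Qed.
Lemma h1N : 1 < N. Proof. lia. Qed.
Lemma h2N : 2 < N. Proof. lia. Qed.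

Lemma adj_sym p q : adj p q -> adj q p.
Proof. rewrite /adj; lia. Qed.

Lemma hXc p q : p < N -> q < N -> nadj p q -> cm (X p) (Y q).
Proof.
move=> hp hq hpq; apply: cm_M; first exact: hYac.
by apply: cm_V; apply: hYc.
Qed.

Lemma hX2 p : p < N -> cm (sq (Y p)) (X p).
Proof.
move=> hp; apply: cm_Mr; first by apply: cm_sym; apply: hR1.
by apply: cm_Vr; rewrite /cm /sq gA.
Qed.

Lemma hYbr p q W : p < N -> q < N -> adj p q ->
  Y p ** (Y q ** (Y p ** W)) = Y q ** (Y p ** (Y q ** W)).
Proof. by move=> hp hq hpq; rewrite -!gA hYb. Qed.

Lemma hYb'r p q : p < N -> q < N -> adj p q ->
  Y p ** (Y q ** Y p) = Y q ** (Y p ** Y q).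
Proof. by move=> hp hq hpq; rewrite -!gA hYb. Qed.

Lemma hX3 p q : p < N -> q < N -> adj p q -> cj (Y p ** Y q) (X p) = X q.
Proof.
move=> hp hq hpq; rewrite /cj /X.
have -> : Y p ** Y q ** (Ya p ** iv (Y p)) = Ya q ** Y p ** Y q ** iv (Y p).
  by rewrite -gA hE.
apply: (@gcanr (Y p ** Y q ** Y p)).
rewrite !gVM !gA; congr (_ ** _).
rewrite !gKl gVl g1r (hYb'r hp hq hpq).
by rewrite gKl.
Qed.

Lemma hX4 p q : p < N -> q < N -> adj p q -> cm (sq (Y q)) (X p).
Proof.
move=> hp hq hpq.
have E' : Y q ** (Y p ** Ya q) = Ya p ** (Y q ** Y p).
  by rewrite -!gA hE //; apply: adj_sym.
have M : Y p ** (Ya q ** Y p) = Y q ** (Ya p ** Y q).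
  by rewrite -!gA hM.
have S : Y q ** (Y q ** (Ya p ** Y q)) = Ya p ** (Y q ** (Y p ** Y p)).
  by rewrite -M -[Y p ** (Ya q ** Y p)]gA -gA E' !gA.
have S2 : Y q ** (Y q ** Ya p) = Ya p ** (Y q ** (Y p ** (Y p ** iv (Y q)))).
  apply: (@gcanr (Y q)); rewrite !gA S; congr (_ ** (_ ** (_ ** _))).
  by rewrite gVl g1r.
rewrite /cm /sq /X !gA -[Y q ** (Ya p ** iv (Y p))]gA -[Y q ** (Y q ** Ya p ** iv (Y p))]gA.
rewrite S2 !gA; congr (_ ** _).
apply: (@gcanr (Y p ** Y q)); rewrite !gA gKl gVl g1r.
rewrite -(hYb'r hp hq hpq) (hYbr _ hq hp (adj_sym hpq)).
by rewrite gKl.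
Qed.

Lemma LI1 p q : p < N -> q < N -> adj p q -> cj (Y p) (Y q) = cj (iv (Y q)) (Y p).
Proof.
move=> hp hq hpq; apply: (@gcanl (Y q)); rewrite /cj gVV.
rewrite -!gA -(hYb hp hq hpq) gKr.
by rewrite !gA gKVl.
Qed.

Lemma cjYY_sq p q : p < N -> q < N -> adj p q ->
  cj (iv (Y q)) (sq (Y p)) = cj (Y p) (sq (Y q)).
Proof.
by move=> hp hq hpq; rewrite !cj_sq -(LI1 hp hq hpq).
Qed.

Lemma cm_cjr a c g : cm c (cj (iv a) g) -> cm (cj a c) g.
Proof. by move=> h; have := (cm_cjl (iv a) c g).1 h; rewrite gVV. Qed.

Lemma cm_cjl' a c g : cm (cj (iv a) c) g -> cm c (cj a g).
Proof. exact: (cm_cjl a c g).2. Qed.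

Lemma cj_cmE a g : cm a g -> cj a g = g.
Proof. by move/cmP. Qed.

Lemma X3c p q : p < N -> q < N -> adj p q -> cj (iv (Y p)) (X q) = cj (Y q) (X p).
Proof. by move=> hp hq hpq; rewrite -(hX3 hp hq hpq) cjM cjK. Qed.

Lemma L1 p q : p < N -> q < N -> adj p q -> cm (sq (Y p)) (cj (Y q) (X q)).
Proof.
move=> hp hq hpq; apply: cm_cjl'; rewrite (cjYY_sq hp hq hpq).
apply: cm_cjr; rewrite (X3c hp hq hpq).
apply: cm_cjl'; rewrite cj_cmE; last by apply: cm_V; rewrite /cm /sq gA.
exact: hX4.
Qed.

Lemma sq_step p q Z : p < N -> q < N -> adj p q -> cm (Y q) Z -> cm (sq (Y p)) Z ->
  cm (sq (Y q)) (cj (Y p) Z).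
Proof.
move=> hp hq hpq h1 h2; apply: cm_cjl'.
rewrite (cjYY_sq hq hp (adj_sym hpq)); apply: cm_cjr.
by rewrite cj_cmE //; apply: cm_V.
Qed.

Lemma cm_sqV a : cm (sq a) (iv a).
Proof. by apply: cm_Vr; rewrite /cm /sq gA. Qed.

Lemma cmYY p q : p < N -> q < N -> nadj p q -> cm (Y p) (Y q).
Proof. exact: hYc. Qed.

Lemma Kid p r : p < N -> r < N -> adj p r ->
  cj (Y r) (cj (Y p) (X p)) = cj (iv (Y p)) (cj (Y r) (X r)).
Proof.
move=> hp hr hpr.
rewrite (cj_sqV (hX2 hp)) -cjM.
have E : Y r ** iv (Y p) = iv (Y p) ** iv (Y r) ** (Y p ** Y r).
  apply: (@gcanl (Y p)); rewrite !gA gKVl.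
  by move: (LI1 hp hr hpr); rewrite /cj gVV !gA.
rewrite E cjM (hX3 hp hr hpr) cjM.
by rewrite -(cj_sqV (hX2 hr)).
Qed.

Lemma sq_base p q r : p < N -> q < N -> r < N -> adj p r -> adj q r -> nadj p q ->
  [/\ cm (sq (Y p)) (cj (Y r) (X p)), cm (sq (Y p)) (cj (Y r) (X q)),
      cm (sq (Y p)) (cj (Y r) (cj (Y p) (X p))) & cm (sq (Y p)) (cj (Y r) (cj (Y q) (X q)))].
Proof.
move=> hp hq hr hpr hqr hpq.
have Xr : cm (sq (Y p)) (X r) by apply: hX4 => //; apply: adj_sym.
have Vq : cm (sq (Y p)) (iv (Y q)) by apply: cm_Vr; apply: cm_sq; exact: hYc.
split.
- rewrite -(X3c hp hr hpr); apply: cm_cj => //; exact: cm_sqV.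
- by rewrite -(X3c hq hr hqr); apply: cm_cj.
- rewrite (Kid hp hr hpr); apply: cm_cj; [exact: cm_sqV | exact: L1].
- by rewrite (Kid hq hr hqr); apply: cm_cj => //; exact: L1.
Qed.

Lemma Hswap p q W : cm (Y p) (Y q) -> cm (sq (Y p)) W -> cm (sq (Y q)) W ->
  cj (Y p) (cj (iv (Y q)) W) = cj (Y q) (cj (iv (Y p)) W).
Proof.
move=> h hp hq.
rewrite cj_cmM; last exact: cm_Vr.
rewrite (cj_sqV hp) [in RHS](cj_sqV (g:=cj _ _)) //.
apply: cm_cj => //; apply: cm_Vr; apply: cm_sq; exact: cm_sym.
Qed.

Lemma H0 p q r : p < N -> q < N -> r < N -> adj p r -> adj q r -> nadj p q ->
  cj (Y p ** Y r) (X q) = cj (Y q ** Y r) (X p) /\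
  cj (Y p ** Y r) (cj (Y q) (X q)) = cj (Y q ** Y r) (cj (Y p) (X p)).
Proof.
move=> hp hq hr hpr hqr hpq.
have cpq : cm (Y p) (Y q) by exact: hYc.
split; rewrite !cjM.
- rewrite -(X3c hq hr hqr) -(X3c hp hr hpr); apply: Hswap => //;
  apply: hX4 => //; exact: adj_sym.
- rewrite (Kid hq hr hqr) (Kid hp hr hpr); apply: Hswap => //; exact: L1.
Qed.

Fixpoint Pd l k := match k with 0 => e | k'.+1 => Y (l + k') ** Pd l k' end.
Definition U j := Pd 2 j.-1.
Definition V i := Pd 1 i.
Definition B (s t : bool) :=
  match s, t with
  | false, true => X 1 | true, true => X 0
  | true, false => cj (Y 1) (X 1) | false, false => cj (Y 0) (X 0) end.
Definition Xr i j s t := cj (V i ** U j) (B s t).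

Lemma Pd_cm g l k : (forall r, l <= r < l + k -> cm g (Y r)) -> cm g (Pd l k).
Proof.
elim: k => [|k IH] h /=; first by apply: cm_sym; apply: cm_1.
apply: cm_Mr; first by apply: h; lia.
by apply: IH => r hr; apply: h; lia.
Qed.

Lemma YPd_cm m l k : m < N -> (forall r, l <= r < l + k -> r < N /\ nadj m r) -> cm (Y m) (Pd l k).
Proof. move=> hm h; apply: Pd_cm => r /h [hr hn]; exact: hYc. Qed.

Lemma Pd_split l k1 k2 : Pd l (k1 + k2) = Pd (l + k1) k2 ** Pd l k1.
Proof.
elim: k2 => [|k2 IH]; first by rewrite addn0 /= g1l.
by rewrite addnS /= IH addnA gA.
Qed.

Lemma Pd_shift l k m : 1 <= l -> l <= m -> m.+1 < l + k -> l + k <= N ->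
  Y m ** Pd l k = Pd l k ** Y m.+1.
Proof.
move=> h1 h2; elim: k => [|k IH] h3 h4; first by lia.
rewrite /=.
case: (ltnP m.+1 (l + k)) => h5.
  rewrite -gA (hYc (p:=m) (q:=l+k)); try side.
  by rewrite gA IH ?gA //; lia.
have E : l + k = m.+1 by lia.
case: k IH h3 h4 h5 E => [|k] IH h3 h4 h5 E; first by lia.
rewrite E /= (_ : l + k = m); last by lia.
rewrite -!gA (hYb (p:=m) (q:=m.+1)); try side.
rewrite !gA; congr (_ ** (_ ** _)).
apply: YPd_cm; first by lia.
move=> r hr; split; side.
Qed.

Lemma cm_via m m' T g : Y m ** T = T ** Y m' -> cm (Y m') g -> cm (Y m) (cj T g).
Proof.
move=> h1 /cmP h2; apply/cmP.
by rewrite -cjM h1 cjM h2.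
Qed.

Lemma B_cm m s t : 3 <= m -> m < N -> cm (Y m) (B s t).
Proof.
move=> h1 h2.
have c0 : cm (Y m) (X 0) by apply: cm_sym; apply: hXc; side.
have c1 : cm (Y m) (X 1) by apply: cm_sym; apply: hXc; side.
have d0 : cm (Y m) (Y 0) by apply: hYc; side.
have d1 : cm (Y m) (Y 1) by apply: hYc; side.
by case: s; case: t => /=; try apply: cm_cj.
Qed.

Lemma B_Y1 s t : cj (Y 1) (B s t) = B t s.
Proof.
have c01 : cm (Y 1) (Y 0) by apply: hYc; side.
have x01 : cm (Y 1) (X 0) by apply: cm_sym; apply: hXc; side.
case: s; case: t => //=.
- by rewrite (cj_cmE x01).
- by rewrite (cj_sqV (hX2 h1N)) cjVK.
- by rewrite (cj_cmM _ c01) (cj_cmE x01).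
Qed.

Lemma B_Y0 s t : cj (Y 0) (B s t) = B (~~t) (~~s).
Proof.
have c01 : cm (Y 0) (Y 1) by apply: hYc; side.
have x01 : cm (Y 0) (X 1) by apply: cm_sym; apply: hXc; side.
case: s; case: t => //=.
- by rewrite (cj_cmM _ c01) (cj_cmE x01).
- by rewrite (cj_cmE x01).
- by rewrite (cj_sqV (hX2 h0N)) cjVK.
Qed.

Lemma Xr_a m i j s t : 1 <= m -> m < N -> i < j -> j < N -> m <> i -> m <> i.+1 ->
  m <> j -> m <> j.+1 -> cm (Y m) (Xr i j s t).
Proof.
move=> h1 h2 h3 h4 h5 h6 h7 h8.
case: (ltnP j.+1 m) => hm1.
  apply: (cm_via (m':=m)); last by apply: B_cm; lia.
  by apply: cm_Mr; apply: YPd_cm => // r hr; split; side.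
have cV : forall m', 1 <= m' -> m' < N -> i.+1 < m' -> cm (Y m') (V i).
  by move=> m' ? ? ?; apply: YPd_cm => // r hr; split; side.
case: (ltnP i.+1 m) => hm2.
  apply: (cm_via (m':=m.+1)); last by apply: B_cm; lia.
  rewrite -gA (cV m) // !gA /U (Pd_shift (l:=2)) //; lia.
apply: (cm_via (m':=m.+2)); last by apply: B_cm; lia.
rewrite -gA /V (Pd_shift (l:=1)) ?gA; try lia.
by rewrite /U (Pd_shift (l:=2)) //; lia.
Qed.

Lemma Xr_c i j s t : i.+1 < j -> cj (Y i.+1) (Xr i j s t) = Xr i.+1 j s t.
Proof. by move=> h; rewrite /Xr -cjM /V /= add1n gA. Qed.

Lemma Xr_e i j s t : i < j -> j.+1 < N -> cj (Y j.+1) (Xr i j s t) = Xr i j.+1 s t.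
Proof.
move=> h1 h2; rewrite /Xr -cjM -gA.
have -> : Y j.+1 ** V i = V i ** Y j.+1.
  by apply: YPd_cm => // r hr; split; side.
rewrite gA /U; case: j h1 h2 => [|j] h1 h2 /=; first by lia.
by rewrite add2n.
Qed.

Lemma Trec i : i.+2 < N -> V i.+1 ** U i.+2 = Y i.+1 ** Y i.+2 ** (V i ** U i.+1).
Proof.
move=> h; rewrite /V /U /= add1n add2n !gA; congr (_ ** _).
rewrite -!gA; congr (_ ** _).
by apply: esym; apply: YPd_cm => // r hr; split; side.
Qed.

Lemma Tf i : i.+1 < N -> Y i.+1 ** (V i ** U i.+1) = (V i ** U i.+1) ** Y 1.
Proof.
elim: i => [|i IH] h; first by rewrite /V /U /= !g1l g1r.
rewrite Trec // -!gA (hYb (p:=i.+2) (q:=i.+1)); try side.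
by rewrite !gA IH ?gA //; lia.
Qed.

Lemma Xr_f i s t : i.+1 < N -> cj (Y i.+1) (Xr i i.+1 s t) = Xr i i.+1 t s.
Proof. by move=> h; rewrite /Xr -cjM Tf // cjM B_Y1. Qed.

Lemma Xr_j s t : cj (Y 0) (Xr 0 1 s t) = Xr 0 1 (~~t) (~~s).
Proof. by rewrite /Xr /V /U /= g1l !cj1 B_Y0. Qed.

Lemma Usplit j : 2 <= j -> U j = Pd 3 (j - 2) ** Y 2.
Proof.
move=> h; rewrite /U (_ : j.-1 = 1 + (j - 2)); last by lia.
by rewrite Pd_split /= addn0 g1r.
Qed.

Lemma cmY0P3 k m : m < N -> (m = 0 \/ m = 1) -> 3 + k <= N -> cm (Y m) (Pd 3 k).
Proof. by move=> h hm hk; apply: YPd_cm => // r hr; split; side. Qed.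

Lemma Hbase s t : cj (Y 0 ** Y 2) (B s t) = cj (Y 1 ** Y 2) (B (~~s) t).
Proof.
have a02 : adj 0 2 by side.
have a12 : adj 1 2 by side.
have n01 : nadj 0 1 by side.
have [H1 H2] := H0 h0N h1N h2N a02 a12 n01.
case: s; case: t => //=.
- by rewrite !hX3 //; lia.
- rewrite !cjM (Kid h0N h2N a02) (Kid h1N h2N a12) !cjVK //.
Qed.

Lemma Xr_h j s t : 2 <= j -> j < N -> cj (Y 0) (Xr 0 j s t) = Xr 1 j (~~s) t.
Proof.
move=> h1 h2; rewrite /Xr /V /= !g1r g1l Usplit // !cjM.
rewrite (cj_cmM _ (cmY0P3 _ _ _)); try lia.
rewrite (cj_cmM _ (cmY0P3 (m:=1) _ _ _)); try lia.
congr (cj _ _); rewrite -!cjM; exact: Hbase.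
Qed.

Lemma SQ3 j s t : 2 <= j -> j < N -> cm (sq (Y 0)) (Xr 0 j s t).
Proof.
move=> h1 h2; rewrite /Xr /V /= g1l Usplit // cjM.
apply: cm_cj; first by apply: cm_sq; apply: cmY0P3 => //; lia.
have [] := sq_base (p:=0) (q:=1) (r:=2) h0N h1N h2N; try side.
by move=> *; case: s; case: t.
Qed.

Lemma SQ1 i j s t : 1 <= i -> i < j -> j < N -> cm (sq (Y i)) (Xr i.-1 j s t).
Proof.
elim: i => [|i IH] h1 h2 h3; first by lia.
case: i IH h1 h2 h3 => [|i] IH h1 h2 h3.
  rewrite /Xr /V /= g1l Usplit ?cjM; try lia.
  apply: cm_cj; first by apply: cm_sq; apply: cmY0P3 => //; lia.
  have [] := sq_base (p:=1) (q:=0) (r:=2) h1N h0N h2N; try side.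
  by clear IH; move=> *; case: s; case: t.
rewrite /= -(Xr_c (i:=i)); last by lia.
apply: sq_step; try side.
  by apply: Xr_a; lia.
by apply: IH; lia.
Qed.

Definition Zr j s t := cj (U j) (B s t).

Lemma CZ j s t : 2 <= j -> j < N -> cm (sq (Y j)) (Zr j.-1 s t).
Proof.
elim: j => [|j IH] h1 h2; first by lia.
case: (ltnP j 2) => hj.
  have -> : j = 1 by lia.
  rewrite /Zr /U /= cj1; clear IH.
  case: s; case: t => /=.
  - by apply: hX4; side.
  - by apply: L1; side.
  - by apply: hX4; side.
  - by apply: L1; side.
rewrite /= /Zr /U (_ : j.-1 = (j.-2).+1); last by lia.
rewrite /= cjM (_ : 2 + j.-2 = j); last by lia.
apply: sq_step; try side.
  apply: cm_cj; last by apply: B_cm; lia.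
  by apply: YPd_cm => // r hr; split; side.
by have := IH hj (ltnW h2); rewrite /Zr /U (_ : j.-1 = (j.-2).+1) //; lia.
Qed.

Lemma SQ2 i j s t : i.+1 < j -> j < N -> cm (sq (Y j)) (Xr i j.-1 s t).
Proof.
move=> h1 h2; rewrite /Xr cjM; apply: cm_cj.
  by apply: cm_sq; apply: YPd_cm => // r hr; split; side.
by apply: CZ; lia.
Qed.

Lemma Xr_b i j s t : 1 <= i -> i < j -> j < N -> cj (Y i) (Xr i j s t) = Xr i.-1 j s t.
Proof.
move=> h1 h2 h3.
have E : i = i.-1.+1 by lia.
rewrite {2}E -Xr_c -?E; last by lia.
by rewrite -cjM; apply/cmP; apply: SQ1.
Qed.

Lemma Xr_d i j s t : i.+1 < j -> j < N -> cj (Y j) (Xr i j s t) = Xr i j.-1 s t.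
Proof.
move=> h1 h2.
have E : j = j.-1.+1 by lia.
rewrite {2}E -Xr_e -?E; try lia.
by rewrite -cjM; apply/cmP; apply: SQ2.
Qed.

Lemma Xr_i j s t : 2 <= j -> j < N -> cj (Y 0) (Xr 1 j s t) = Xr 0 j (~~s) t.
Proof.
move=> h1 h2; rewrite -{1}(negbK s) -Xr_h // -cjM.
by apply/cmP; apply: SQ3.
Qed.

Lemma braid_cj p q W : p < N -> q < N -> adj p q ->
  cj (Y p) (cj (Y q) (cj (Y p) W)) = cj (Y q) (cj (Y p) (cj (Y q) W)).
Proof. by move=> hp hq hpq; rewrite -!cjM hYb. Qed.

Lemma Xr_g i j s t : 2 <= i -> i < j -> j < N -> cm (Y 0) (Xr i j s t).
Proof.
move=> h1 h2 h3.
have E : Xr i j s t = cj (Pd 3 (i - 2)) (cj (Y 2) (Xr 1 j s t)).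
  rewrite /Xr /V.
  have -> : Pd 1 i = Pd 3 (i - 2) ** Pd 1 2.
    by rewrite -[3]/(1 + 2) -Pd_split; congr Pd; lia.
  by rewrite -!cjM /= addn0 add1n !g1r !gA.
rewrite E; apply: cm_cj; first by apply: cmY0P3 => //; lia.
apply/cmP.
rewrite -{1}(negbK s) -Xr_h; try lia.
rewrite braid_cj; try side.
have cA : cm (Y 2) (Xr 0 j (~~s) t) by apply: Xr_a; lia.
rewrite (cj_cmE cA).
by rewrite Xr_h ?negbK //; lia.
Qed.

Definition rt := (nat * nat * bool * bool)%type.

Definition act (m : nat) (b : rt) : rt :=
  let: (i, j, s, t) := b in
  if m == 0 then
    if (i == 0) && (j == 1) then (0, 1, ~~ t, ~~ s)
    else if i == 0 then (1, j, ~~ s, t)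
    else if i == 1 then (0, j, ~~ s, t)
    else b
  else
    if (i == m.-1) && (j == m) then (i, j, t, s)
    else if i == m then (i.-1, j, s, t)
    else if i == m.-1 then (i.+1, j, s, t)
    else if j == m then (i, j.-1, s, t)
    else if j == m.-1 then (i, j.+1, s, t)
    else b.

Definition valid (b : rt) : bool := let: (i, j, _, _) := b in (i < j) && (j < N).
Definition XR (b : rt) : G := let: (i, j, s, t) := b in Xr i j s t.

Lemma act_valid m b : m < N -> valid b -> valid (act m b).
Proof.
case: b => [[[i j] s] t] /= hm /andP [h1 h2].
by repeat (case: ifP => /= ?); lia.
Qed.

Lemma act_inv m b : m < N -> valid b -> act m (act m b) = b.
Proof.
case: b => [[[i j] s] t] /= hm /andP [h1 h2].
by repeat (case: ifP => /= ?); rewrite ?negbK //; congr (_, _, _, _); lia.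
Qed.

Lemma act_eq m b : m < N -> valid b -> cj (Y m) (XR b) = XR (act m b).
Proof.
case: b => [[[i j] s] t] /= hm /andP [h1 h2].
case: (m =P 0) => [->|hm0] /=.
  case: ifP => [/andP [/eqP -> /eqP ->]|h01]; first exact: Xr_j.
  case: (i =P 0) => [hi|hi].
    by subst i; apply: Xr_h => //; move/negbT: h01; lia.
  case: (i =P 1) => [hi1|hi1].
    by subst i; apply: Xr_i; lia.
  by apply/cmP; apply: Xr_g; lia.
case: ifP => [/andP [/eqP hi /eqP hj]|hf].
  by subst j; rewrite hi (_ : m = m.-1.+1) ?Xr_f //; lia.
case: (i =P m) => [hi|hi].
  by subst i; apply: Xr_b; lia.
case: (i =P m.-1) => [hi'|hi'].
  have -> : m = i.+1 by lia.
  by apply: Xr_c; move/negbT: hf; lia.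
case: (j =P m) => [hj|hj].
  by subst j; apply: Xr_d; lia.
case: (j =P m.-1) => [hj'|hj'].
  have -> : m = j.+1 by lia.
  by apply: Xr_e; lia.
by apply/cmP; apply: Xr_a; lia.
Qed.

Lemma act_eqV m b : m < N -> valid b -> cj (iv (Y m)) (XR b) = XR (act m b).
Proof.
move=> hm hb.
by rewrite -{1}(act_inv hm hb) -(act_eq hm (act_valid hm hb)) cjK.
Qed.

Definition actw (w : seq (nat * bool)) (b : rt) : rt := foldr (fun x b => act x.1 b) b w.
Definition Ew (w : seq (nat * bool)) : G :=
  foldr (fun x acc => (if x.2 then iv (Y x.1) else Y x.1) ** acc) e w.

Lemma actw_valid w b : all (fun x => x.1 < N) w -> valid b -> valid (actw w b).
Proof.
elim: w => [|x w IH] //= /andP [hx hw] hb.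
by apply: act_valid => //; apply: IH.
Qed.

Lemma Ew_eq w b : all (fun x => x.1 < N) w -> valid b -> cj (Ew w) (XR b) = XR (actw w b).
Proof.
elim: w => [|x w IH] /=; first by move=> _ _; rewrite cj1.
move=> /andP [hx hw] hb; rewrite cjM IH //.
have hv := actw_valid hw hb.
by case: x.2; [apply: act_eqV | apply: act_eq].
Qed.

Definition rootp (k : nat) : rt := if k == 0 then (0, 1, true, true) else (k.-1, k, false, true).

Lemma valid_root k : k < N -> valid (rootp k).
Proof. rewrite /rootp; case: ifP => /= ? ?; lia. Qed.

Lemma XR_root k : k < N -> XR (rootp k) = X k.
Proof.
rewrite /rootp; case: (k =P 0) => [->|hk] /= hN'.
  by rewrite /Xr /V /U /= g1l cj1.
elim: k hk hN' => [|k IH] // _ hk.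
case: (k =P 0) => [->|hk0].
  by rewrite /Xr /V /U /= g1l cj1.
move: hk0 IH hk; case: k => [|p] // _ IH hk /=.
have := IH ltac:(done) (ltnW hk); rewrite /Xr /= => IH'.
rewrite Trec // cjM IH'.
by rewrite hX3 //; side.
Qed.

Lemma fix_X k w : k < N -> all (fun x => x.1 < N) w -> actw w (rootp k) = rootp k ->
  cj (Ew w) (X k) = X k.
Proof.
move=> hk hw h.
by rewrite -(XR_root hk) Ew_eq ?h //; apply: valid_root.
Qed.
End Grp.


Import GRing.Theory.
Local Open Scope ring_scope.


Definition sg (s : bool) : int := if s then 1 else -1.
Definition vf (b : rt) (k : nat) : int :=
  let: (i, j, s, t) := b in (if k == i then sg s else 0) + (if k == j then sg t else 0).
Definition colv n (b : rt) : 'cV[int]_n := \col_(k < n) vf b k.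
Definition alpha (m l : nat) : int :=
  if m == 0%N then (if (l == 0%N) || (l == 1%N) then 1 else 0)
  else if l == m then 1 else if l.+1 == m then -1 else 0.

Lemma sum_sel n (f : nat -> int) (i : nat) (a : int) : (i < n)%N ->
  \sum_(l < n) f l * (if (l : nat) == i then a else 0) = f i * a.
Proof.
move=> h.
rewrite (eq_bigr (fun l : 'I_n => if (l : nat) == i then f l * a else 0)); last first.
  by move=> l _; case: eqP; rewrite ?mulr0.
by rewrite -big_mkcond (big_ord1_eq _ (fun l => f l * a)) h.
Qed.

Lemma vec_core (m : nat) (b : rt) (k : nat) :   let: (i, j, s, t) := b in (i < j)%N ->
  vf b k - alpha m k * (alpha m i * sg s + alpha m j * sg t) = vf (act m b) k.
Proof.
case: b => [[[i j] s] t] hij.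
rewrite /act /vf /alpha /sg.
have [E|hm] := eqVneq m 0%N.
  subst m; rewrite /=.
  by repeat (case: ifP => /= ?; try (exfalso; lia)); lia.
case: m hm => [|m] // _ /=; rewrite ?eqSS.
by repeat (case: ifP => /= ?; try (exfalso; lia)); lia.
Qed.

Lemma root_vecE n (m l : 'I_n) : root_vec m 0 l = alpha m l.
Proof. by rewrite /root_vec mxE. Qed.

Lemma act_vec n (m : 'I_n) b : valid n b -> refl_mx m *m colv n b = colv n (act m b).
Proof.
case: b => [[[i j] s] t] /andP [hij hjn].
apply/matrixP => k z; rewrite (ord1 z) {z}.
rewrite /refl_mx mulmxBl mul1mx -mulmxA !mxE big_ord1 !mxE -/(alpha m k).
under eq_bigr => l _ do rewrite !mxE -/(alpha m l) /vf mulrDr.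
rewrite big_split /= !sum_sel //; last by lia.
exact: (vec_core m (i, j, s, t) k hij).
Qed.


Section Quot.
Variables (n : nat) (A : comPzRingType).
Local Notation W := (word n A).

Lemma br_ctx (p q u v : W) : br_eq u v -> br_eq (p ++ u ++ q) (p ++ v ++ q).
Proof.
elim => [u0 v0 r s0 H|w|w1 w2 _ IH|w1 w2 w3 _ IH1 _ IH2].
- by have := br_step (p ++ u0) (v0 ++ q) H; rewrite -!catA.
- exact: br_refl.
- exact: br_sym.
- exact: br_trans IH1 IH2.
Qed.

Lemma br_cat (u u' v v' : W) : br_eq u u' -> br_eq v v' -> br_eq (u ++ v) (u' ++ v').
Proof.
move=> h1 h2; apply: (br_trans (w2 := u' ++ v)).
  by have := br_ctx [::] v h1.
by have := br_ctx u' [::] h2; rewrite !cats0.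
Qed.

Lemma br_relE (r s : W) : br_rel r s -> br_eq r s.
Proof. by move=> h; have := br_step [::] [::] h; rewrite /= !cats0. Qed.

Definition Gq := {P : W -> Prop | exists w, P = br_eq w}.
Definition emb (w : W) : Gq := exist _ (br_eq w) (ex_intro _ w erefl).

Lemma Gq_eq (g h : Gq) : sval g = sval h -> g = h.
Proof.
case: g h => [P hP] [Q hQ] /= E; subst Q.
by rewrite (proof_irrelevance _ hP hQ).
Qed.

Lemma emb_eq u v : br_eq u v -> emb u = emb v.
Proof.
move=> h; apply: Gq_eq => /=; apply: functional_extensionality => x.
apply: propositional_extensionality; split => H.
  exact: br_trans (br_sym h) H.
exact: br_trans h H.
Qed.

Lemma emb_inj u v : emb u = emb v -> br_eq u v.
Proof. move/(congr1 sval) => /= E; rewrite E; exact: br_refl. Qed.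

Lemma emb_surj g : exists w, g = emb w.
Proof. case: g => P [w hw]; exists w; exact: Gq_eq. Qed.

Definition rep (g : Gq) : W := proj1_sig (constructive_indefinite_description _ (emb_surj g)).
Lemma repK g : emb (rep g) = g.
Proof. rewrite /rep; case: constructive_indefinite_description => w /= E; by rewrite -E. Qed.
Lemma rep_emb w : br_eq (rep (emb w)) w.
Proof. exact: emb_inj (repK (emb w)). Qed.

Definition mulq (g h : Gq) : Gq := emb (rep g ++ rep h).
Lemma mulqE u v : mulq (emb u) (emb v) = emb (u ++ v).
Proof. by apply: emb_eq; apply: br_cat; apply: rep_emb. Qed.

Definition flipl (x : letter n A) : letter n A := (x.1, ~~ x.2).
Definition winv (w : W) : W := rev (map flipl w).

Lemma winvK w : winv (winv w) = w.
Proof.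
rewrite /winv map_rev revK -map_comp.
rewrite (eq_map (g := id)) ?map_id //.
by case=> [[k c] b]; rewrite /flipl /= negbK.
Qed.

Lemma cancel_r (w : W) : br_eq (w ++ winv w) [::].
Proof.
elim: w => [|x w IH]; first exact: br_refl.
rewrite /winv /= rev_cons -cats1 -/(winv w).
have -> : x :: w ++ winv w ++ [:: flipl x] = [:: x] ++ (w ++ winv w) ++ [:: flipl x].
  by rewrite /= catA.
apply: br_trans (br_ctx _ _ IH) _ => /=.
case: x => [[k c] []]; apply: br_relE; rewrite /flipl /=.
  exact: (rel_cancel_l k c).
exact: (rel_cancel_r k c).
Qed.

Lemma cancel_l (w : W) : br_eq (winv w ++ w) [::].
Proof. by have := cancel_r (winv w); rewrite winvK. Qed.

Lemma inv_congr u v : br_eq u v -> br_eq (winv u) (winv v).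
Proof.
move=> h.
apply: (br_trans (w2 := winv u ++ (u ++ winv v))).
  have := br_ctx (winv u) [::] (br_trans (br_cat h (br_refl (winv v))) (cancel_r v)).
  rewrite !cats0 => H; exact: br_sym H.
rewrite catA; have := br_ctx [::] (winv v) (cancel_l u); by rewrite /=.
Qed.

Definition invq (g : Gq) : Gq := emb (winv (rep g)).
Lemma invqE u : invq (emb u) = emb (winv u).
Proof. by apply: emb_eq; apply: inv_congr; apply: rep_emb. Qed.
Definition oneq : Gq := emb [::].

Lemma qA a b c : mulq (mulq a b) c = mulq a (mulq b c).
Proof.
case: (emb_surj a) => u ->; case: (emb_surj b) => v ->; case: (emb_surj c) => w ->.
by rewrite !mulqE catA.
Qed.
Lemma q1l a : mulq oneq a = a.
Proof. by case: (emb_surj a) => u ->; rewrite mulqE. Qed.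
Lemma q1r a : mulq a oneq = a.
Proof. by case: (emb_surj a) => u ->; rewrite mulqE cats0. Qed.
Lemma qVl a : mulq (invq a) a = oneq.
Proof. case: (emb_surj a) => u ->; rewrite invqE mulqE; apply: emb_eq; exact: cancel_l. Qed.
Lemma qVr a : mulq a (invq a) = oneq.
Proof. case: (emb_surj a) => u ->; rewrite invqE mulqE; apply: emb_eq; exact: cancel_r. Qed.

Lemma embC (x : letter n A) (w : W) : emb (x :: w) = mulq (emb [:: x]) (emb w).
Proof. by rewrite mulqE. Qed.

End Quot.


Section Inj.
Variable n : nat.

Lemma vf_nz (b : rt) l : valid n b ->
  (vf b l != 0) = (l == b.1.1.1) || (l == b.1.1.2).
Proof.
case: b => [[[i j] s] t] /= /andP [h1 h2]; rewrite /vf /sg.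
by case: (l =P i) => hi; case: (l =P j) => hj;
  case: s; case: t => //=; lia.
Qed.

Lemma colv_inj (b b' : rt) : valid n b -> valid n b' -> colv n b = colv n b' -> b = b'.
Proof.
move=> hb hb' E.
have F : forall l, (l < n)%N -> vf b l = vf b' l.
  by move=> l hl; have := congr1 (fun M : 'cV[int]_n => M (Ordinal hl) 0) E; rewrite !mxE.
clear E; move: hb hb' F; case: b => [[[i j] s] t]; case: b' => [[[i' j'] s'] t'] /=.
move=> /andP [h1 h2] /andP [h1' h2'] F.
have Z : forall l, (l < n)%N -> ((l == i) || (l == j)) = ((l == i') || (l == j')).
  move=> l hl; have := vf_nz l (b := (i, j, s, t)); rewrite /= h1 h2 => <- //.
  have := vf_nz l (b := (i', j', s', t')); rewrite /= h1' h2' => <- //.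
  by rewrite F.
have Zi := Z i (ltn_trans h1 h2); have Zj := Z j h2.
have Zi' := Z i' (ltn_trans h1' h2'); have Zj' := Z j' h2'.
rewrite !eqxx /= ?orbT in Zi Zj Zi' Zj'.
have ei : i = i' by lia.
have ej : j = j' by lia.
subst i' j'.
have Fi := F i (ltn_trans h1 h2); have Fj := F j h2.
move: Fi Fj; clear F Z Zi Zj Zi' Zj'; rewrite /vf /sg !eqxx (_ : (i == j) = false); last by lia.
rewrite (_ : (j == i) = false); last by lia.
by case: s; case: t; case: s'; case: t' => //= ? ?; lia.
Qed.
End Inj.

Section Main.
Variables (n' : nat) (A : comPzRingType) (a : A).
Local Notation n := n'.+1.

Definition Yg (m : nat) (c : A) : Gq n A := emb [:: y (inord m : 'I_n) c].
Definition Yc m := Yg m 0.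
Definition Yac m := Yg m a.

Lemma vinordK m : (m < n)%N -> val (inord m : 'I_n) = m.
Proof. exact: inordK. Qed.

Lemma adjlt_val p q : (p < n)%N -> (q < n)%N ->
  adj_lt (inord p : 'I_n) (inord q) = ((0 < p)%N && (p.+1 == q)) || ((p == 0%N) && (q == 2%N)).
Proof. by move=> hp hq; rewrite /adj_lt !vinordK. Qed.

Lemma adj_cases p q : (p < n)%N -> (q < n)%N -> adj p q ->
  adj_lt (inord p : 'I_n) (inord q) \/ adj_lt (inord q : 'I_n) (inord p).
Proof. by move=> hp hq; rewrite !adjlt_val // /adj; lia. Qed.

Lemma comm_rel p q (c d : A) : (p < n)%N -> (q < n)%N -> nadj p q ->
  cm (@mulq n A) (Yg p c) (Yg q d).
Proof.
move=> hp hq [h1 h2]; rewrite /cm /Yg !mulqE /=; apply: emb_eq; apply: br_relE.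
apply: rel_comm.
  by apply/eqP => /(congr1 val); rewrite !vinordK.
by rewrite /adjacent !adjlt_val //; move: h2; rewrite /adj; lia.
Qed.

Lemma hYc_q p q : (p < n)%N -> (q < n)%N -> nadj p q -> cm (@mulq n A) (Yc p) (Yc q).
Proof. exact: comm_rel. Qed.
Lemma hYac_q p q : (p < n)%N -> (q < n)%N -> nadj p q -> cm (@mulq n A) (Yac p) (Yc q).
Proof. exact: comm_rel. Qed.

Lemma hYb_q p q : (p < n)%N -> (q < n)%N -> adj p q ->
  mulq (mulq (Yc p) (Yc q)) (Yc p) = mulq (mulq (Yc q) (Yc p)) (Yc q).
Proof.
move=> hp hq hpq; rewrite /Yc /Yg !mulqE /=.
case: (adj_cases hp hq hpq) => h; apply: emb_eq.
  by have := br_relE (rel_braid (0:A) 0 0 h); rewrite mul0r addr0.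
by apply: br_sym; have := br_relE (rel_braid (0:A) 0 0 h); rewrite mul0r addr0.
Qed.

Lemma hR1_q p : (p < n)%N -> cm (@mulq n A) (Yac p) (sq (@mulq n A) (Yc p)).
Proof.
move=> hp; rewrite /cm /sq /Yac /Yc /Yg !mulqE /=; apply: emb_eq.
by have := br_relE (rel_1 (inord p : 'I_n) a 0); rewrite addr0.
Qed.

Lemma hE_q p q : (p < n)%N -> (q < n)%N -> adj p q ->
  mulq (mulq (Yc p) (Yc q)) (Yac p) = mulq (mulq (Yac q) (Yc p)) (Yc q).
Proof.
move=> hp hq hpq; rewrite /Yac /Yc /Yg !mulqE /=.
case: (adj_cases hp hq hpq) => h; apply: emb_eq.
  by have := br_relE (rel_braid (0:A) 0 a h); rewrite mul0r addr0.
by apply: br_sym; have := br_relE (rel_braid a (0:A) 0 h); rewrite mulr0 addr0.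
Qed.

Lemma hM_q p q : (p < n)%N -> (q < n)%N -> adj p q ->
  mulq (mulq (Yc p) (Yac q)) (Yc p) = mulq (mulq (Yc q) (Yac p)) (Yc q).
Proof.
move=> hp hq hpq; rewrite /Yac /Yc /Yg !mulqE /=.
case: (adj_cases hp hq hpq) => h; apply: emb_eq.
  by have := br_relE (rel_braid (0:A) a 0 h); rewrite mul0r addr0.
by apply: br_sym; have := br_relE (rel_braid (0:A) a 0 h); rewrite mul0r addr0.
Qed.

Lemma qcanr (x b c : Gq n A) : mulq b x = mulq c x -> b = c.
Proof.
move=> h; rewrite -(q1r b) -(q1r c) -(qVr x) -!qA h //.
Qed.

Definition bw (w : artin_word n) : seq (nat * bool) := map (fun x => (val x.1, x.2)) w.

Lemma Yinv_q (k : 'I_n) : invq (emb [:: y k (0 : A)]) = emb [:: yinv k 0].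
Proof.
by rewrite invqE /winv /=.
Qed.

Lemma Ew_q (w : artin_word n) : Ew (@mulq n A) (@oneq n A) (@invq n A) Yc (bw w) = emb (embed A w).
Proof.
elim: w => [|x w IH] //=.
rewrite IH embC; congr mulq.
rewrite /Yc /Yg inord_val.
by case: x => k [] /=; rewrite ?Yinv_q.
Qed.

Lemma X_q (k : 'I_n) : X (@mulq n A) (@invq n A) Yc Yac k = emb [:: y k a; yinv k 0].
Proof. by rewrite /X /Yac /Yc /Yg inord_val Yinv_q mulqE. Qed.

Lemma actw_vec (hN : (3 <= n)%N) (w : artin_word n) b : valid n b ->
  colv n (actw (bw w) b) = weyl_image w *m colv n b.
Proof.
elim: w => [|x w IH] hb /=; first by rewrite mul1mx.
rewrite -mulmxA -IH // act_vec //.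
apply: (actw_valid hN) => //; apply/allP => z /mapP [x' _ ->] /=; exact: ltn_ord.
Qed.

Lemma key (w : artin_word n) (k : 'I_n) : (3 <= n)%N ->
  actw (bw w) (rootp k) = rootp k ->
  cj (@mulq n A) (@invq n A) (emb (embed A w)) (emb [:: y k a; yinv k 0]) =
  emb [:: y k a; yinv k 0].
Proof.
move=> hN hfix.
rewrite -Ew_q -X_q.
apply: (fix_X (@qA n A) (@q1l n A) (@q1r n A) (@qVl n A) (@qVr n A) hN
  hYc_q hYac_q hYb_q hR1_q hE_q hM_q (ltn_ord k)) => //.
apply/allP => z /mapP [x' _ ->] /=; exact: ltn_ord.
Qed.

Lemma pure_fix (hN : (3 <= n)%N) (w : artin_word n) b : in_PBr w -> valid n b -> actw (bw w) b = b.
Proof.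
move=> hw hb; apply: (colv_inj (n := n)) => //.
  apply: (actw_valid hN) => //; apply/allP => z /mapP [x' _ ->] /=; exact: ltn_ord.
by rewrite actw_vec // hw mul1mx.
Qed.

End Main.

Theorem lemma3p9 (n : nat) (hn : (3 <= n)%N) (A : comPzRingType)
  (k : node n) (w : artin_word n) (hw : in_PBr w) :
  (exists w' : artin_word n, forall a : A,
      br_eq (y k a :: embed A w) (embed A w' ++ [:: y k a]))
  /\
  (forall a : A,
      br_eq [:: y k a, yinv k (0 : A) & embed A w]
            (embed A w ++ [:: y k a; yinv k (0 : A)])).
Proof.
case: n hn k w hw => [//|n'] hn k w hw.
have hk : valid n'.+1 (rootp k) by apply: (valid_root hn).
split.
  exists ((k, false) :: w ++ [:: (k, true)]) => a.
  apply: emb_inj.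
  set E := emb (embed A w).
  set Xk := emb [:: y k a; yinv k (0 : A)].
  have Ya : emb [:: y k a] = mulq Xk (emb [:: y k 0]).
    rewrite /Xk mulqE /=; apply: emb_eq; apply: br_sym.
    exact: (br_ctx [:: y k a] [::] (br_relE (rel_cancel_l k (0 : A)))).
  have Hw' : actw (bw ((k, false) :: w ++ [:: (k, true)])) (rootp k) = rootp k.
    rewrite /bw /= map_cat /actw foldr_cat /= -/(actw (bw w) _).
    rewrite (pure_fix hn) //; first by rewrite (act_inv hn) //; exact: ltn_ord.
    by apply: (act_valid hn) => //; exact: ltn_ord.
  have K := key a hn Hw'.
  rewrite -/Xk in K.
  have C : mulq (emb (embed A ((k, false) :: w ++ [:: (k, true)]))) Xk =
           mulq Xk (emb (embed A ((k, false) :: w ++ [:: (k, true)]))).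
    apply: (qcanr (x := invq (emb (embed A ((k, false) :: w ++ [:: (k, true)]))))).
    by transitivity Xk; [exact: K | rewrite qA qVr q1r].
  have Ew' : emb (embed A ((k, false) :: w ++ [:: (k, true)])) =
             mulq (mulq (emb [:: y k 0]) E) (emb [:: yinv k 0]).
    by rewrite /E !mulqE /embed /= map_cat.
  rewrite embC -mulqE Ya Ew' in C *.
  have Yl : mulq (emb [:: yinv k (0 : A)]) (emb [:: y k 0]) = @oneq _ A.
    by rewrite mulqE; apply: emb_eq; apply: br_relE; exact: rel_cancel_l.
  by rewrite -qA C !qA Yl q1r.
move=> a; apply: emb_inj.
have K := key a hn (pure_fix hn hw hk).
rewrite -(mulqE [:: y k a; yinv k 0]) -(mulqE (embed A w)).
apply: (qcanr (x := invq (emb (embed A w)))).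
rewrite qA qVr q1r; exact: esym K.
Qed.
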